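(* Let $G$ be a finite abelian group, let $t\ge2$, and let $H_1,\dots,H_t$ be distinct subgroups of $G$ and $D$ a subgroup with $H_i\cap H_j=D$ for all $i\neq j$ and $|H_i:D|>2$ for all $1\le i\le t$. Let $H=H_1+\dots+H_t$. Let $\mathcal{A}$ consist of the following subsets of $G$: (1) $A_i=H_i\setminus D$ for $1\le i\le t$; (2) all cosets of $D$ that are contained in $H$ but not contained in $H_1\cup\dots\cup H_t$; (3) for some chosen set (possibly empty) of cosets of $H$ different from $H$ itself, all the cosets of $D$ lying within those cosets of $H$. Then $\mathcal{A}$ is a bimodal collection of pairwise disjoint subsets of $G$; moreover, the members $S$ of $\mathcal{A}$ with $|S|$ smaller than the order of the internal difference group of $S$ are exactly $A_1,\dots,A_t$, the internal difference group of $A_i$ is $H_i$, and $(H_i)\setminus A_i=D$ is a subgroup (so $\mathcal{A}$ is in canonical position).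
   Context: $G$ is written additively. The internal difference group of a subset $S\subseteq G$ is the subgroup generated by all $x-y$ with $x,y\in S$. A collection $\{A_1,\dots,A_m\}$ of pairwise disjoint subsets of $G$ is bimodal if for every $i$ and every $\delta\in G\setminus\{0\}$, the number $N_i(\delta)$ of pairs $(a,b)$ with $a\in A_i$, $b\in A_j$ for some $j\neq i$, and $a-b=\delta$, satisfies $N_i(\delta)\in\{0,|A_i|\}$. *)

(* Defs.v *)
(* The finite abelian group G is a finGroupType gT with
   [set: gT] abelian; the paper's additive notation x - y is written x * y^-1. *)
From mathcomp Require Import all_boot all_fingroup.
Set Implicit Arguments. Unset Strict Implicit. Unset Printing Implicit Defensive.
Local Open Scope group_scope.

Definition diff_group (gT : finGroupType) (S : {set gT}) : {set gT} :=
  <<[set x * y^-1 | x in S, y in S]>>.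

Definition Ncount (gT : finGroupType) (P : {set {set gT}}) (A : {set gT})
    (delta : gT) : nat :=
  #|[set ab : gT * gT | (ab.1 \in A) && (ab.2 \in cover (P :\ A))
                         && (ab.1 * ab.2^-1 == delta)]|.

Definition bimodal (gT : finGroupType) (P : {set {set gT}}) : Prop :=
  trivIset P /\
  forall A, A \in P -> forall delta : gT, delta != 1 ->
    Ncount P A delta = 0 \/ Ncount P A delta = #|A|.

(* Main.v *)
Require Import Defs.
From mathcomp Require Import all_boot all_fingroup.
From mathcomp Require Import zify.
Local Open Scope group_scope.

Lemma const_card (T : finType) (S : {set T}) (p : pred T) :
  {in S &, forall a b, p a = p b} ->
  #|[set a in S | p a]| = 0%N \/ #|[set a in S | p a]| = #|S|.
Proof.
move=> Hc.
case: (boolP [exists a in S, p a]) => [/existsP [a /andP [aS pa]]|/existsPn N].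
  right; rewrite (_ : [set a in S | p a] = S) //; apply/setP => x; rewrite inE.
  case xS: (x \in S) => //=; by rewrite (Hc x a xS aS).
left; apply/eqP; rewrite cards_eq0; apply/eqP/setP => x; rewrite !inE.
by case xS: (x \in S) => //=; move: (N x); rewrite xS /= => /negbTE.
Qed.

Lemma Ncount_eq (gT : finGroupType) (P : {set {set gT}}) (S : {set gT})
   (d : gT) :
  Ncount P S d = #|[set a in S | d^-1 * a \in cover (P :\ S)]|.
Proof.
rewrite /Ncount.
have -> : [set ab : gT * gT | (ab.1 \in S) && (ab.2 \in cover (P :\ S))
                         && (ab.1 * ab.2^-1 == d)] =
   (fun a => (a, d^-1 * a)) @: [set a in S | d^-1 * a \in cover (P :\ S)].
  apply/setP => -[a b]; rewrite inE /=; apply/idP/imsetP.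
    case/andP => [/andP [aS bU] /eqP e].
    have eb : b = d^-1 * a by rewrite -e invMg invgK -mulgA mulVg mulg1.
    by exists a; [rewrite inE aS -eb | rewrite eb].
  case=> a'; rewrite inE => /andP [aS aU] [-> ->].
  by rewrite aS aU /= invMg invgK mulgA mulgV mul1g.
by apply: card_imset => x y [].
Qed.

Theorem theorem3p11 (gT : finGroupType) (t : nat) (Hs : 'I_t -> {group gT})
    (D : {group gT}) (C : {set {set gT}}) :
  abelian [set: gT] ->
  2 <= t ->
  injective Hs ->
  (forall i j, i != j -> Hs i :&: Hs j = D) ->
  (forall i, 2 < #|Hs i : D|) ->
  let H := <<\bigcup_(i < t) Hs i>> in
  C \subset rcosets H [set: gT] ->
  H \notin C ->
  let A := fun i => Hs i :\: D in
  let calA :=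
    [set A i | i : 'I_t]
    :|: [set X in rcosets D H | ~~ (X \subset \bigcup_(i < t) Hs i)]
    :|: [set X in rcosets D [set: gT] | [exists Y in C, X \subset Y]] in
  [/\ bimodal calA,
      [set S in calA | #|S| < #|diff_group S| ] = [set A i | i : 'I_t],
      forall i, diff_group (A i) = Hs i
    & forall i, Hs i :\: A i = D].
Proof.
move=> ab t2 injH HsD idx H CH HnC A calA.
move/centsP: ab => ab.
have mulC (x y : gT) : x * y = y * x by exact: ab x (in_setT x) y (in_setT y).
have t0 : (0 < t)%N by apply: leq_trans t2.
have t1 : (1 < t)%N by [].
pose i0 := Ordinal t0.
have DHi i : D \subset Hs i.
  have [j ji] : exists j : 'I_t, j != i.
    case: (eqVneq i i0) => [->|ne]; last by exists i0; rewrite eq_sym.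
    by exists (Ordinal t1); apply/eqP => /(congr1 val).
  by rewrite -(HsD j i ji) subsetIr.
have HiH i : Hs i \subset H.
  apply/subsetP => x xi; apply: mem_gen; apply/bigcupP; by exists i.
have DH : D \subset H by apply: subset_trans (HiH i0).
pose W := cover C.
pose Ucup := \bigcup_(i < t) Hs i.
have HY Y : Y \in C -> exists y, Y = H :* y.
  move=> YC; have := subsetP CH Y YC; case/rcosetsP => y _ ->; by exists y.
have WH x : x \in W -> x \in H -> False.
  case/bigcupP => Y YC xY xH; case: (HY Y YC) => y Yy.
  move: xY; rewrite Yy => /rcoset_eqP e.
  have YH : Y = H by rewrite Yy -e rcoset_id.
  by move: HnC; rewrite -YH YC.
have Wst h x : h \in H -> x \in W -> h * x \in W.
  move=> hH /bigcupP [Y YC xY]; apply/bigcupP; exists Y => //.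
  case: (HY Y YC) => y Yy; move: xY; rewrite Yy !mem_rcoset => xY.
  by rewrite -mulgA groupM.
have WstE h x : h \in H -> (h * x \in W) = (x \in W).
  move=> hH; apply/idP/idP; last exact: Wst.
  by move=> /(Wst h^-1); rewrite groupV mulKg; apply.
pose U := cover calA.
have calAcase S : S \in calA -> [\/ exists i, S = A i,
     exists2 y, y \in H & (S = D :* y /\ ~~ (S \subset Ucup)) |
     exists y, S = D :* y /\ exists2 Y, Y \in C & S \subset Y].
  rewrite /calA => /setUP [/setUP [/imsetP [i _ ->]| /setIdP [/rcosetsP [y yH ->] ns]] | /setIdP [/rcosetsP [y _ ->] /existsP [Y /andP [YC sub]]]].
  - by constructor 1; exists i.
  - by constructor 2; exists y.
  - by constructor 3; exists y; split => //; exists Y.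
have AcalA i : A i \in calA.
  by rewrite /calA; apply/setUP; left; apply/setUP; left; apply: imset_f.
have uniqA x i j : x \in A i -> x \in A j -> i = j.
  move=> xi xj; apply/eqP; apply/negPn/negP => ne; move: (HsD i j ne) => e.
  move: xi xj; rewrite /A !inE => /andP [xD xi] /andP [_ xj].
  have : x \in Hs i :&: Hs j by rewrite inE xi xj.
  by rewrite e (negbTE xD).
have cosub (K : {group gT}) y : y \in K -> D \subset K -> D :* y \subset K.
  move=> yK DK; apply/subsetP => z; rewrite mem_rcoset => zy.
  by rewrite -(mulgVK y z) groupM // (subsetP DK).
have HiU i : Hs i \subset Ucup.
  by apply/subsetP => x xi; apply/bigcupP; exists i.
pose f x := if [pick i | x \in A i] is Some i then A i else D :* x.
have blk S : S \in calA -> forall x, x \in S -> S = f x.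
  case/calAcase => [[i ->]|[y yH [-> ns]]|[y [-> [Y YC sub]]]] x xS; rewrite /f; case: pickP => [j xj|N].
  - by rewrite (uniqA x i j xS xj).
  - by have := N i; rewrite xS.
  - exfalso; case/negP: ns; rewrite -(rcoset_eqP xS).
    apply: subset_trans (HiU j); apply: cosub (DHi j).
    by move: xj; rewrite /A inE => /andP [].
  - by apply/esym/rcoset_eqP.
  - exfalso; apply: (WH x).
      by apply/bigcupP; exists Y => //; apply: (subsetP sub).
    by move: xj; rewrite /A inE => /andP [_ /(subsetP (HiH j))].
  - by apply/esym/rcoset_eqP.
have triv : trivIset calA.
  apply/trivIsetP => S T SA TA neq; rewrite -setI_eq0; apply/eqP/setP => x.
  rewrite inE in_set0; apply/negP => /andP [xS xT].
  by move/eqP: neq; apply; rewrite (blk S SA x xS) (blk T TA x xT).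
have coverD S : S \in calA -> cover (calA :\ S) = U :\: S.
  move=> SA; apply/setP => x; rewrite inE; apply/bigcupP/andP.
    case=> T /setD1P [TS TA] xT; split.
      apply/negP => xS; move: TS; by rewrite (blk T TA x xT) (blk S SA x xS) eqxx.
    by apply/bigcupP; exists T.
  case=> xnS /bigcupP [T TA xT]; exists T => //; apply/setD1P; split => //.
  by apply/eqP => TS; move: xT; rewrite TS (negbTE xnS).
have Uchar x : (x \in U) = (if x \in H then x \notin D else x \in W).
  apply/idP/idP.
    case/bigcupP => S SA xS.
    case/calAcase: SA => [[i Si]|[y yH [Si ns]]|[y [Si [Y YC sub]]]]; rewrite Si in xS.
    - move: xS; rewrite /A inE => /andP [xD xi].
      by rewrite (subsetP (HiH i) x xi).
    - rewrite (subsetP (cosub _ y yH DH) x xS); apply/negP => xD.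
      case/negP: ns; rewrite Si -(rcoset_eqP xS) (rcoset_id xD).
      exact: subset_trans (DHi i0) (HiU i0).
    - have xW : x \in W.
        by apply/bigcupP; exists Y => //; apply: (subsetP sub); rewrite Si.
      case xH: (x \in H) => //; exfalso; exact: WH xW xH.
  case xH: (x \in H); [move=> xD | move=> xW].
    case: (boolP [exists i, x \in Hs i]) => [/existsP [i xi]|/existsPn N].
      by apply/bigcupP; exists (A i) => //; rewrite /A inE xD xi.
    apply/bigcupP; exists (D :* x); last exact: rcoset_refl.
    rewrite /calA; apply/setUP; left; apply/setUP; right; rewrite inE; apply/andP; split.
      by apply/rcosetsP; exists x.
    apply/negP => sub; have := subsetP sub x (rcoset_refl _ _).
    by case/bigcupP => i _ xi; move: (N i); rewrite xi.
  have := xW; case/bigcupP => Y YC xY.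
  apply/bigcupP; exists (D :* x); last exact: rcoset_refl.
  rewrite /calA; apply/setUP; right; rewrite inE; apply/andP; split.
    by apply/rcosetsP; exists x; rewrite ?inE.
  apply/existsP; exists Y; rewrite YC /=.
  case: (HY Y YC) => y Yy; move: xY; rewrite Yy => /rcoset_eqP <-.
  exact: mulSg DH.
have diffD y : diff_group (D :* y) \subset D.
  rewrite /diff_group gen_subG; apply/subsetP => z /imset2P [a b aS bS ->].
  rewrite mem_rcoset in aS; rewrite mem_rcoset in bS.
  have -> : a * b^-1 = (a*y^-1)*(b*y^-1)^-1.
    by rewrite invMg invgK mulgA mulgVK.
  by apply: groupM => //; rewrite groupV.
have diffA i : diff_group (A i) = Hs i.
  apply/eqP; rewrite eqEsubset; apply/andP; split.
    rewrite /diff_group gen_subG; apply/subsetP => z /imset2P [a b].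
    by rewrite /A !inE => /andP [_ ai] /andP [_ bi] ->; rewrite groupM ?groupV.
  apply/subsetP => h hi.
  have cardA : #|D| < #|A i|.
    rewrite /A cardsD (setIidPr (DHi i)).
    have := Lagrange (DHi i); have := idx i; have := cardG_gt0 D.
    move=> d0 ix L.
    have : #|D| * 3 <= #|Hs i| by rewrite -L leq_mul2l ix orbT.
    lia.
  have /subsetPn [a aA aN] : ~~ (A i \subset h^-1 *: D).
    by apply/negP => sub; have := subset_leq_card sub; rewrite card_lcoset leqNgt cardA.
  rewrite mem_lcoset invgK in aN.
  rewrite -(mulgK a h); apply: mem_gen; apply/imset2P; exists (h*a) a => //.
  move: aA; rewrite /A !inE => /andP [_ ai]; by rewrite aN groupM.
split.
- split => // S SA d d1.
  rewrite Ncount_eq coverD //; apply: const_card => a b aS bS.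
  case/calAcase: SA => [[i Si]|[y yH [Si _]]|[y [Si _]]].
  + rewrite Si in aS bS *.
    have pA z : z \in A i -> (d^-1 * z \in U :\: A i) = (if d \in H then d \notin Hs i else d^-1 \in W).
      move=> zA; have := zA; rewrite /A inE => /andP [zD zi].
      have zH := subsetP (HiH i) z zi.
      rewrite !inE Uchar (groupMr _ zH) (groupMr _ zi) !groupV.
      case dH: (d \in H).
        case di: (d \in Hs i) => /=; first by case: (_ \notin D).
        rewrite andbF /=; apply/negP => yD; have := subsetP (DHi i) _ yD.
        by rewrite (groupMr _ zi) groupV di.
      have -> : (d \in Hs i) = false.
        by apply/negP => /(subsetP (HiH i)); rewrite dH.
      by rewrite andbF /= mulC WstE.
    by rewrite !pA.
  + rewrite Si in aS bS *.
    have kD : b * a^-1 \in D.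
      rewrite mem_rcoset in aS; rewrite mem_rcoset in bS.
      have -> : b * a^-1 = (b*y^-1)*(a*y^-1)^-1.
        by rewrite invMg invgK mulgA mulgVK.
      by apply: groupM => //; rewrite groupV.
    have kH := subsetP DH _ kD.
    have e : d^-1 * b = (b * a^-1) * (d^-1 * a).
      by rewrite (mulC d^-1 a) mulgA mulgVK mulC.
    have Sst z : (b * a^-1 * z \in D :* y) = (z \in D :* y).
      by rewrite !mem_rcoset -mulgA groupMl.
    have Ust z : (b * a^-1 * z \in U) = (z \in U).
      by rewrite !Uchar (groupMl _ kH) (groupMl _ kD) WstE.
    by rewrite e !in_setD Sst Ust.
  + rewrite Si in aS bS *.
    have kD : b * a^-1 \in D.
      rewrite mem_rcoset in aS; rewrite mem_rcoset in bS.
      have -> : b * a^-1 = (b*y^-1)*(a*y^-1)^-1.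
        by rewrite invMg invgK mulgA mulgVK.
      by apply: groupM => //; rewrite groupV.
    have kH := subsetP DH _ kD.
    have e : d^-1 * b = (b * a^-1) * (d^-1 * a).
      by rewrite (mulC d^-1 a) mulgA mulgVK mulC.
    have Sst z : (b * a^-1 * z \in D :* y) = (z \in D :* y).
      by rewrite !mem_rcoset -mulgA groupMl.
    have Ust z : (b * a^-1 * z \in U) = (z \in U).
      by rewrite !Uchar (groupMl _ kH) (groupMl _ kD) WstE.
    by rewrite e !in_setD Sst Ust.
- apply/setP => S; rewrite inE; apply/andP/idP.
    case=> SA; case/calAcase: SA => [[i ->] _|[y _ [-> _]]|[y [-> _]]].
    + exact: imset_f.
    + by rewrite card_rcoset => lt; have := subset_leq_card (diffD y); rewrite leqNgt lt.
    + by rewrite card_rcoset => lt; have := subset_leq_card (diffD y); rewrite leqNgt lt.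
  case/imsetP => i _ ->; split => //.
  rewrite diffA; apply: proper_card; apply/properP; split; first exact: subsetDl.
  by exists 1; rewrite ?group1 // /A inE group1.
- exact: diffA.
- move=> i; rewrite /A setDDr setDv set0U; exact/setIidPr/DHi.
Qed.
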